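(* Let $M$ be the monoid (algebra in sets) generated by $a,b,c,d,e,f,g,h,i,j,k,l$ subject to the relations $da=eb$, $fb=hc$, $gb=ic$, $kh=li$ and $je=kf=lg$. Then $M$ is basic-set, i.e. for all $u,v,x\in M$, $ux=vx$ implies $u=v$.
   Context: For an associative algebra viewed as an operad concentrated in arity $1$, the basic-set condition (injectivity of $\nu\mapsto\gamma(\nu;\nu_1)$) is right cancellativity of the underlying monoid. *)

(* Defs.v *)
(* The monoid M is presented as the free monoid on 12 letters
   (words = lists, product = concatenation, unit = empty word) modulo the
   congruence generated by the defining relations. *)
From Stdlib Require Import List Relations.
Import ListNotations.

Inductive gen : Type := ga | gb | gc | gd | ge | gf | gg | gh | gi | gj | gk | gl.

Definition word := list gen.

Inductive rel0 : word -> word -> Prop :=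
  | r_da_eb : rel0 [gd; ga] [ge; gb]
  | r_fb_hc : rel0 [gf; gb] [gh; gc]
  | r_gb_ic : rel0 [gg; gb] [gi; gc]
  | r_kh_li : rel0 [gk; gh] [gl; gi]
  | r_je_kf : rel0 [gj; ge] [gk; gf]
  | r_kf_lg : rel0 [gk; gf] [gl; gg].

Inductive step : word -> word -> Prop :=
  | step_ctx : forall p q l r, rel0 l r -> step (p ++ l ++ q) (p ++ r ++ q).

Definition Meq : word -> word -> Prop := clos_refl_sym_trans word step.

(* Main.v *)
Require Import Defs.
From Stdlib Require Import List Relations Arith Bool Lia.
Import ListNotations.

Definition gidx (x : gen) : nat :=
  match x with ga=>0|gb=>1|gc=>2|gd=>3|ge=>4|gf=>5|gg=>6|gh=>7|gi=>8|gj=>9|gk=>10|gl=>11 end.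
Definition geqb x y := Nat.eqb (gidx x) (gidx y).
Lemma geqb_ok x y : geqb x y = true -> x = y.
Proof. destruct x, y; simpl; intros H; try reflexivity; discriminate. Qed.
Fixpoint weqb (a b : word) : bool :=
  match a, b with [], [] => true | x::a', y::b' => geqb x y && weqb a' b' | _, _ => false end.
Lemma weqb_ok a b : weqb a b = true -> a = b.
Proof. revert b; induction a as [|x a IH]; destruct b; simpl; try discriminate; auto.
  intros H; apply andb_true_iff in H as [H1 H2]. f_equal; auto using geqb_ok. Qed.

Definition all_gen := [ga;gb;gc;gd;ge;gf;gg;gh;gi;gj;gk;gl].
Lemma all_gen_ok g : In g all_gen. Proof. destruct g; simpl; tauto. Qed.

Fixpoint strip (l w : word) : option word :=
  match l with [] => Some w | a::l' => match w with [] => None | b::w' => if geqb a b then strip l' w' else None end end.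
Lemma strip_ok l w q : strip l w = Some q -> w = l ++ q.
Proof. revert w; induction l as [|a l IH]; simpl; intros w H.
  - congruence.
  - destruct w as [|b w]; try discriminate. destruct (geqb a b) eqn:E; try discriminate.
    apply geqb_ok in E; subst. simpl; f_equal; auto. Qed.

Definition rels : list (word*word) :=
  [([gd;ga],[ge;gb]); ([ge;gb],[gd;ga]); ([gf;gb],[gh;gc]); ([gh;gc],[gf;gb]);
   ([gg;gb],[gi;gc]); ([gi;gc],[gg;gb]); ([gk;gh],[gl;gi]); ([gl;gi],[gk;gh]);
   ([gj;ge],[gk;gf]); ([gk;gf],[gj;ge]); ([gk;gf],[gl;gg]); ([gl;gg],[gk;gf])].
Lemma rels_ok l r : In (l,r) rels -> rel0 l r \/ rel0 r l.
Proof. simpl; intros H; repeat destruct H as [H|H]; inversion H; subst;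
  first [left; constructor | right; constructor]. Qed.

Lemma Meq_ctx p q a b : Meq a b -> Meq (p ++ a ++ q) (p ++ b ++ q).
Proof. induction 1.
  - apply rst_step. destruct H as [p0 q0 l r H].
    replace (p ++ (p0 ++ l ++ q0) ++ q) with ((p ++ p0) ++ l ++ (q0 ++ q)) by (repeat rewrite <- app_assoc; reflexivity).
    replace (p ++ (p0 ++ r ++ q0) ++ q) with ((p ++ p0) ++ r ++ (q0 ++ q)) by (repeat rewrite <- app_assoc; reflexivity).
    constructor; auto.
  - apply rst_refl.
  - apply rst_sym; auto.
  - eapply rst_trans; eauto. Qed.

Lemma step_len a b : step a b -> length a = length b.
Proof. destruct 1 as [p q l r H]; inversion H; subst; repeat rewrite length_app; reflexivity. Qed.
Lemma Meq_len a b : Meq a b -> length a = length b.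
Proof. induction 1; auto using step_len; congruence. Qed.

Definition heads (w : word) : list word :=
  flat_map (fun lr => match strip (fst lr) w with Some q => [snd lr ++ q] | None => [] end) rels.
Fixpoint nbrs (w : word) : list word :=
  match w with [] => [] | x::w' => heads w ++ map (cons x) (nbrs w') end.

Lemma heads_ok w w' : In w' (heads w) -> Meq w w'.
Proof. unfold heads; intros H. apply in_flat_map in H as [[l r] [Hin H]]. simpl in H.
  destruct (strip l w) eqn:E; [|destruct H]. destruct H as [H|[]]; subst.
  apply strip_ok in E; subst. destruct (rels_ok _ _ Hin) as [R|R].
  - apply rst_step. exact (step_ctx [] w0 l r R).
  - apply rst_sym, rst_step. exact (step_ctx [] w0 r l R). Qed.

Lemma nbrs_ok w w' : In w' (nbrs w) -> Meq w w'.
Proof. revert w'; induction w as [|x w IH]; simpl; intros w' H; [destruct H|].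
  apply in_app_or in H as [H|H]; [apply heads_ok; auto|].
  apply in_map_iff in H as [y [<- Hy]].
  pose proof (Meq_ctx [x] [] _ _ (IH _ Hy)) as M. rewrite !app_nil_r in M. exact M. Qed.

Definition wmem w ws := existsb (weqb w) ws.
Definition dedup (ws : list word) := fold_left (fun acc w => if wmem w acc then acc else acc ++ [w]) ws [].
Lemma dedup_in y ws : In y (dedup ws) -> In y ws.
Proof. unfold dedup. assert (forall acc, In y (fold_left (fun acc w => if wmem w acc then acc else acc ++ [w]) ws acc) -> In y acc \/ In y ws) as G.
  { induction ws as [|w ws IH]; simpl; auto. intros acc H. apply IH in H as [H|H]; auto.
    destruct (wmem w acc); auto. apply in_app_or in H as [H|[H|[]]]; auto. }
  intros H; apply G in H as [[]|H]; auto. Qed.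

Fixpoint cl n w := match n with 0 => [w] | S n => let c := cl n w in dedup (c ++ flat_map nbrs c) end.
Lemma cl_ok n w w' : In w' (cl n w) -> Meq w w'.
Proof. revert w'; induction n; simpl; intros w' H.
  - destruct H as [<-|[]]; apply rst_refl.
  - apply dedup_in, in_app_or in H as [H|H]; auto.
    apply in_flat_map in H as [z [Hz H]]. eapply rst_trans; [apply IHn; eauto| apply nbrs_ok; auto]. Qed.

Fixpoint wlt (a b : word) : bool :=
  match a, b with x::a', y::b' => (gidx x <? gidx y) || ((gidx x =? gidx y) && wlt a' b') | _, _ => false end.
Definition lmin (w0 : word) ws := fold_left (fun a b => if wlt b a then b else a) ws w0.
Lemma lmin_in w0 ws : In (lmin w0 ws) (w0 :: ws).
Proof. unfold lmin; revert w0; induction ws as [|w ws IH]; simpl; intros w0; auto.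
  destruct (wlt w w0); [right; apply IH | destruct (IH w0) as [H|H]; [left; auto | right; right; auto]]. Qed.

Definition cw (w : word) := lmin w (cl 5 w).
Lemma cw_ok w : Meq w (cw w).
Proof. unfold cw. destruct (lmin_in w (cl 5 w)) as [H|H].
  - rewrite <- H; apply rst_refl.
  - eapply cl_ok; eauto. Qed.

Definition F (rs : list gen) (t : gen) : list gen :=
  rev (cw (rev (firstn 3 (t :: rs)))) ++ skipn 3 (t :: rs).
Definition nf (w : word) := fold_left F w [].


Lemma F_sound rs t : Meq (rev (F rs t)) (rev rs ++ [t]).
Proof. unfold F. rewrite rev_app_distr, rev_involutive.
  change (rev rs ++ [t]) with (rev (t :: rs)).
  replace (rev (t :: rs)) with (rev (skipn 3 (t :: rs)) ++ rev (firstn 3 (t :: rs)))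
    by (rewrite <- rev_app_distr, firstn_skipn; reflexivity).
  pose proof (Meq_ctx (rev (skipn 3 (t :: rs))) [] _ _ (cw_ok (rev (firstn 3 (t :: rs))))) as M.
  rewrite !app_nil_r in M. apply rst_sym; exact M. Qed.

Lemma nf_snoc w t : nf (w ++ [t]) = F (nf w) t.
Proof. unfold nf; rewrite fold_left_app; reflexivity. Qed.

Lemma nf_sound w : Meq w (rev (nf w)).
Proof. induction w as [|t w IH] using rev_ind.
  - apply rst_refl.
  - rewrite nf_snoc. eapply rst_trans; [|apply rst_sym, F_sound].
    pose proof (Meq_ctx [] [t] _ _ IH) as M; exact M. Qed.

Lemma F_rel l r : rel0 l r -> forall s, fold_left F l s = fold_left F r s.
Proof. intros H s. destruct s as [|s1 [|s2 rest]].
  - destruct H; vm_compute; reflexivity.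
  - destruct H; destruct s1; vm_compute; reflexivity.
  - destruct H; destruct s1, s2; vm_compute; reflexivity. Qed.

Lemma nf_Meq a b : Meq a b -> nf a = nf b.
Proof. induction 1; try congruence. destruct H as [p q l r H].
  unfold nf; rewrite !fold_left_app. rewrite (F_rel l r H). reflexivity. Qed.

Definition can x y := weqb (cw [x;y]) [x;y].
Fixpoint Nrev (s : list gen) : bool :=
  match s with x1 :: ((x2 :: _) as s') => can x2 x1 && Nrev s' | _ => true end.

Lemma Nrev_app A r rest : Nrev (A ++ r :: rest) = Nrev (A ++ [r]) && Nrev (r :: rest).
Proof. induction A as [|a A IH].
  - cbn [app]. change (Nrev [r]) with true. rewrite andb_true_l. reflexivity.
  - destruct A as [|a' A].
    + cbn [app]. change (Nrev (a :: r :: rest)) with (can r a && Nrev (r :: rest)).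
      change (Nrev [a; r]) with (can r a && true). rewrite andb_true_r; reflexivity.
    + change ((a :: a' :: A) ++ r :: rest) with (a :: a' :: (A ++ r :: rest)).
      change ((a :: a' :: A) ++ [r]) with (a :: a' :: (A ++ [r])).
      change (Nrev (a :: a' :: (A ++ r :: rest))) with (can a' a && Nrev ((a' :: A) ++ r :: rest)).
      change (Nrev (a :: a' :: (A ++ [r]))) with (can a' a && Nrev ((a' :: A) ++ [r])).
      rewrite IH, andb_assoc; reflexivity. Qed.

Definition forall_gen (P : gen -> bool) := forallb P all_gen.
Lemma forall_gen_ok P : forall_gen P = true -> forall g, P g = true.
Proof. unfold forall_gen; rewrite forallb_forall; auto using all_gen_ok. Qed.

Notation chk1 := (forall_gen (fun t => Nrev (rev (cw [t])))).
Notation chk2 := (forall_gen (fun s1 => forall_gen (fun t => Nrev (rev (cw [s1;t]))))).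
Notation chk3 := (forall_gen (fun s2 => forall_gen (fun s1 => forall_gen (fun t =>
   negb (can s2 s1) || Nrev (rev (cw [s2;s1;t])))))).
Notation chk4 := (forall_gen (fun r1 => forall_gen (fun s2 => forall_gen (fun s1 => forall_gen (fun t =>
   negb (can s2 s1 && can r1 s2) || Nrev (rev (cw [s2;s1;t]) ++ [r1])))))).
Lemma chk1_ok : chk1 = true. Proof. vm_compute; reflexivity. Qed.
Lemma chk2_ok : chk2 = true. Proof. vm_compute; reflexivity. Qed.
Lemma chk3_ok : chk3 = true. Proof. vm_compute; reflexivity. Qed.
Lemma chk4_ok : chk4 = true. Proof. vm_compute; reflexivity. Qed.

Notation chk5 := (forall_gen (fun x => forall_gen (fun y => forall_gen (fun t =>
   negb (weqb (cw [x;t]) (cw [y;t])) || geqb x y)))).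
Definition tab (t : gen) := flat_map (fun y2 => map (fun y1 => (y2, y1, can y2 y1, cw [y2;y1;t])) all_gen) all_gen.
Notation chk6 := (forall_gen (fun t => let L := tab t in
  forallb (fun a => forallb (fun b =>
    match a, b with (x2,x1,cx,wx), (y2,y1,cy,wy) =>
      negb (cx && cy && weqb wx wy) || (geqb x2 y2 && geqb x1 y1) end) L) L)).
Lemma chk5_ok : chk5 = true. Proof. vm_compute; reflexivity. Qed.
Lemma chk6_ok : chk6 = true. Proof. vm_compute; reflexivity. Qed.

Lemma F_nil t : F [] t = rev (cw [t]) ++ []. Proof. reflexivity. Qed.
Lemma F_one s1 t : F [s1] t = rev (cw [s1;t]) ++ []. Proof. reflexivity. Qed.
Lemma F_two s1 s2 rest t : F (s1::s2::rest) t = rev (cw [s2;s1;t]) ++ rest. Proof. reflexivity. Qed.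

Lemma orb_neg b c : negb b || c = true -> b = true -> c = true.
Proof. destruct b, c; simpl; auto. Qed.

Lemma Nrev_F s t : Nrev s = true -> Nrev (F s t) = true.
Proof. intros Hs. destruct s as [|s1 [|s2 rest]].
  - rewrite F_nil, app_nil_r. exact (forall_gen_ok _ chk1_ok t).
  - rewrite F_one, app_nil_r. exact (forall_gen_ok _ (forall_gen_ok _ chk2_ok s1) t).
  - rewrite F_two. cbn [Nrev] in Hs. apply andb_true_iff in Hs as [H1 H2].
    destruct rest as [|r1 rest].
    + rewrite app_nil_r. eapply orb_neg; [exact (forall_gen_ok _ (forall_gen_ok _ (forall_gen_ok _ chk3_ok s2) s1) t)|exact H1].
    + rewrite Nrev_app. change (can r1 s2 && Nrev (r1 :: rest) = true) in H2. apply andb_true_iff in H2 as [H2 H3].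
      rewrite H3, andb_true_r.
      eapply orb_neg; [exact (forall_gen_ok _ (forall_gen_ok _ (forall_gen_ok _ (forall_gen_ok _ chk4_ok r1) s2) s1) t)|].
      rewrite H1, H2; reflexivity. Qed.

Lemma Nrev_nf w : Nrev (nf w) = true.
Proof. induction w as [|t w IH] using rev_ind; [reflexivity|]. rewrite nf_snoc; apply Nrev_F; auto. Qed.

Lemma weqb_refl w : weqb w w = true.
Proof. induction w as [|x w IH]; simpl; auto. rewrite IH, andb_true_r. destruct x; reflexivity. Qed.

Lemma app_inv_len (A A' B B' : list gen) : length A = length A' -> A ++ B = A' ++ B' -> A = A' /\ B = B'.
Proof. revert A'; induction A as [|a A IH]; destruct A' as [|a' A']; simpl; intros Hl He; try discriminate; auto.
  injection He as -> He. destruct (IH A'); auto. subst; auto. Qed.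

Lemma rev_inj' (A B : list gen) : rev A = rev B -> A = B.
Proof. intros H. rewrite <- (rev_involutive A), <- (rev_involutive B), H; reflexivity. Qed.

Lemma len_F s t : length (F s t) = S (length s).
Proof. pose proof (Meq_len _ _ (F_sound s t)) as H. rewrite length_app, !length_rev in H. cbn [length] in H. lia. Qed.

Lemma len_cw w : length (cw w) = length w.
Proof. symmetry; apply Meq_len, cw_ok. Qed.

Lemma F_inj s s' t : Nrev s = true -> Nrev s' = true -> F s t = F s' t -> s = s'.
Proof. intros Hs Hs' HF.
  assert (Hl : length s = length s') by (pose proof (f_equal (@length _) HF) as L; rewrite !len_F in L; lia).
  destruct s as [|s1 [|s2 rest]], s' as [|s1' [|s2' rest']]; simpl in Hl; try discriminate; auto.
  - rewrite !F_one, !app_nil_r in HF. apply rev_inj' in HF.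
    pose proof (forall_gen_ok _ (forall_gen_ok _ (forall_gen_ok _ chk5_ok s1) s1') t) as C.
    cbv beta in C. rewrite HF, weqb_refl in C. simpl in C. apply geqb_ok in C; subst; reflexivity.
  - rewrite !F_two in HF. apply app_inv_len in HF as [HF ->];
      [| rewrite !length_rev, !len_cw; reflexivity].
    apply rev_inj' in HF.
    cbn [Nrev] in Hs, Hs'. apply andb_true_iff in Hs as [Hs _]. apply andb_true_iff in Hs' as [Hs' _].
    pose proof (forall_gen_ok _ chk6_ok t) as C. cbv beta in C.
    rewrite forallb_forall in C.
    assert (Hin : forall y2 y1, In (y2, y1, can y2 y1, cw [y2;y1;t]) (tab t)).
    { intros y2 y1. unfold tab. apply in_flat_map. exists y2. split; [apply all_gen_ok|].
      apply in_map_iff. exists y1. split; [reflexivity|apply all_gen_ok]. }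
    specialize (C _ (Hin s2 s1)). rewrite forallb_forall in C. specialize (C _ (Hin s2' s1')).
    rewrite Hs, Hs', HF, weqb_refl in C. simpl in C.
    apply andb_true_iff in C as [C1 C2]. apply geqb_ok in C1; apply geqb_ok in C2. subst; reflexivity. Qed.

Theorem mainTheorem9 :
  forall u v x : word, Meq (u ++ x) (v ++ x) -> Meq u v.
Proof.
  intros u v x H. apply nf_Meq in H.
  assert (nf u = nf v) as E.
  { induction x as [|t x IH] using rev_ind.
    - rewrite !app_nil_r in H; exact H.
    - apply IH. rewrite !app_assoc, !nf_snoc in H.
      apply F_inj in H; auto using Nrev_nf. }
  eapply rst_trans; [apply nf_sound|]. rewrite E. apply rst_sym, nf_sound.
Qed.
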